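(* Let $\beta\in\mathbb{F}_{p^m}\setminus\{0\}$. The $(\alpha+\beta u)$-constacyclic codes of length $4p^s$ over $R$, i.e. the ideals of $\mathcal{R}_{\alpha,\beta}=R[x]/\langle x^{4p^s}-(\alpha+\beta u)\rangle$, are exactly the principal ideals $$\left\langle\left(x^2+\gamma x+\tfrac{\gamma^2}{2}\right)^i\left(x^2-\gamma x+\tfrac{\gamma^2}{2}\right)^j\right\rangle,\qquad 0\le i,j\le 2p^s.$$
   Context: Let $p$ be an odd prime and $m,s$ positive integers with $p^m\equiv 3\pmod 4$; $\mathbb{F}_{p^m}$ is the field with $p^m$ elements and $R=\mathbb{F}_{p^m}[u]/\langle u^2\rangle$. Fix $\alpha\in\mathbb{F}_{p^m}\setminus\{0\}$ that is not a square in $\mathbb{F}_{p^m}$, let $\alpha_0\in\mathbb{F}_{p^m}$ satisfy $\alpha_0^{p^s}=\alpha$, and let $\gamma\in\mathbb{F}_{p^m}$ satisfy $\gamma^4+4\alpha_0=0$. For a unit $\lambda\in R$, a $\lambda$-constacyclic code of length $n$ over $R$ is an $R$-submodule $\mathcal{C}\subseteq R^n$ closed under $(c_0,\dots,c_{n-1})\mapsto(\lambda c_{n-1},c_0,\dots,c_{n-2})$; via $(c_0,\dots,c_{n-1})\mapsto\sum c_ix^i$ these are identified with the ideals of $R[x]/\langle x^n-\lambda\rangle$. *)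

(* Defs.v *)
From HB Require Import structures.
From mathcomp Require Import all_boot all_order all_algebra all_field.
Set Implicit Arguments. Unset Strict Implicit. Unset Printing Implicit Defensive.
Import GRing.Theory.
Local Open Scope ring_scope.

(* The ring R = F[u]/<u^2> of dual numbers over a field F:                   *)
(* the element Dual a b stands for a + b u.                                 *)
Section DualNumbers.
Variable F : fieldType.

Inductive dual : Type := Dual of F & F.

Definition dre (z : dual) := let: Dual a _ := z in a.
Definition dim (z : dual) := let: Dual _ b := z in b.

Definition dual_to_prod (z : dual) : F * F := (dre z, dim z).
Definition prod_to_dual (z : F * F) : dual := Dual z.1 z.2.
Lemma dual_to_prodK : cancel dual_to_prod prod_to_dual. Proof. by case. Qed.

HB.instance Definition _ := Choice.copy dual (can_type dual_to_prodK).

Definition dual_zero := Dual 0 0.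
Definition dual_opp z := Dual (- dre z) (- dim z).
Definition dual_add z w := Dual (dre z + dre w) (dim z + dim w).

Lemma dual_addA : associative dual_add.
Proof. by case=> a b [c d] [e f]; rewrite /dual_add /= !addrA. Qed.
Lemma dual_addC : commutative dual_add.
Proof. by case=> a b [c d]; rewrite /dual_add /= addrC [b + _]addrC. Qed.
Lemma dual_add0 : left_id dual_zero dual_add.
Proof. by case=> a b; rewrite /dual_add /= !add0r. Qed.
Lemma dual_addN : left_inverse dual_zero dual_opp dual_add.
Proof. by case=> a b; rewrite /dual_add /= !addNr. Qed.

HB.instance Definition _ := GRing.isZmodule.Build dual
  dual_addA dual_addC dual_add0 dual_addN.

Definition dual_one := Dual 1 0.
(* (a + b u)(c + d u) = ac + (ad + bc) u, since u^2 = 0 *)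
Definition dual_mul z w :=
  Dual (dre z * dre w) (dre z * dim w + dim z * dre w).

Lemma dual_mulA : associative dual_mul.
Proof.
case=> a b [c d] [e f]; rewrite /dual_mul /=.
by rewrite !mulrA !mulrDl !mulrDr !mulrA !addrA.
Qed.
Lemma dual_mulC : commutative dual_mul.
Proof. by case=> a b [c d]; rewrite /dual_mul /= mulrC addrC [a * d]mulrC [b * c]mulrC. Qed.
Lemma dual_mul1 : left_id dual_one dual_mul.
Proof. by case=> a b; rewrite /dual_mul /= !mul1r mul0r addr0. Qed.
Lemma dual_mulDl : left_distributive dual_mul dual_add.
Proof.
case=> a b [c d] [e f]; rewrite /dual_mul /dual_add /=.
rewrite !mulrDl; congr Dual; rewrite -!addrA; congr (_ + _).
by rewrite addrCA.
Qed.
Lemma dual_one_neq0 : dual_one != dual_zero.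
Proof. by apply/eqP=> -[] /eqP; rewrite oner_eq0. Qed.

HB.instance Definition _ := GRing.Zmodule_isComNzRing.Build dual
  dual_mulA dual_mulC dual_mul1 dual_mulDl dual_one_neq0.

Definition demb (a : F) : dual := Dual a 0.

End DualNumbers.

Section Constacyclic.
Variable R : comNzRingType.

Definition cshift (n : nat) (lam : R) (c : 'rV[R]_n) : 'rV[R]_n :=
  \row_(i < n) ((if val i == 0%N then lam else 1) * c 0 (ord_pred i)).

Definition constacyclic_code (n : nat) (lam : R) (C : 'rV[R]_n -> Prop) : Prop :=
  [/\ C 0,
      (forall x y, C x -> C y -> C (x + y)),
      (forall (r : R) x, C x -> C (r *: x)) &
      (forall x, C x -> C (cshift lam x))].

Definition word_poly (n : nat) (c : 'rV[R]_n) : {poly R} :=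
  \sum_(i < n) (c 0 i)%:P * 'X^i.

(* c, viewed as an element of R[x]/<x^n - lam>, lies in the principal ideal
   generated by (the class of) g *)
Definition in_principal (n : nat) (lam : R) (g : {poly R}) (c : 'rV[R]_n) : Prop :=
  exists a b : {poly R}, word_poly c = a * g + b * ('X^n - lam%:P).

End Constacyclic.

(* Main.v *)
Require Import Defs.
From HB Require Import structures.
From mathcomp Require Import all_boot all_order all_algebra all_field.
Set Implicit Arguments. Unset Strict Implicit. Unset Printing Implicit Defensive.
Import GRing.Theory.
From mathcomp Require Import ring.
Local Open Scope ring_scope.
Section W.
Variable R : comNzRingType.

Lemma word_coefE n (c : 'rV[R]_n) k :
  (word_poly c)`_k = \sum_(i < n) c 0 i * (k == i)%:R.
Proof. by rewrite /word_poly coef_sum; apply: eq_bigr => i _; rewrite coefCM coefXn. Qed.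

Lemma word_coef n (c : 'rV[R]_n) (i : 'I_n) : (word_poly c)`_i = c 0 i.
Proof.
rewrite word_coefE (bigD1 i) //= eqxx mulr1 big1 ?addr0 //.
by move=> j hj; rewrite (_ : (nat_of_ord i == j) = false) ?mulr0 //; apply/negbTE; rewrite eq_sym; exact: hj.
Qed.

Lemma word_coef_ge n (c : 'rV[R]_n) k : (n <= k)%N -> (word_poly c)`_k = 0.
Proof.
move=> hk; rewrite word_coefE big1 // => i _.
by rewrite (_ : (k == i) = false) ?mulr0 //; apply/negbTE; rewrite neq_ltn (leq_trans (ltn_ord i) hk) orbT.
Qed.

Lemma word_size n (c : 'rV[R]_n) : (size (word_poly c) <= n)%N.
Proof. by apply/leq_sizeP => j hj; rewrite word_coef_ge. Qed.

Lemma word_inj n (c c' : 'rV[R]_n) : word_poly c = word_poly c' -> c = c'.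
Proof.
by move=> e; apply/rowP => i; move: (congr1 (fun p : {poly R} => p`_i) e); rewrite !word_coef.
Qed.

Lemma word_add n (c c' : 'rV[R]_n) : word_poly (c + c') = word_poly c + word_poly c'.
Proof. by rewrite /word_poly -big_split; apply: eq_bigr => i _; rewrite mxE polyCD mulrDl. Qed.

Lemma word_scale n r (c : 'rV[R]_n) : word_poly (r *: c) = r%:P * word_poly c.
Proof. by rewrite /word_poly mulr_sumr; apply: eq_bigr => i _; rewrite mxE polyCM mulrA. Qed.

Lemma word0 n : word_poly (0 : 'rV[R]_n) = 0.
Proof. by rewrite /word_poly big1 // => i _; rewrite mxE mul0r. Qed.

Lemma word_of_poly n (P : {poly R}) : (size P <= n)%N ->
  exists c : 'rV[R]_n, word_poly c = P.
Proof.
move=> hP; exists (\row_(i < n) P`_i); apply/polyP => k.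
case: (ltnP k n) => hk.
  by rewrite (word_coef _ (Ordinal hk)) mxE.
by rewrite word_coef_ge // nth_default // (leq_trans hP hk).
Qed.

Lemma word_shift n lam (c : 'rV[R]_n.+1) :
  word_poly (cshift lam c) = 'X * word_poly c - (c 0 ord_max)%:P * ('X^(n.+1) - lam%:P).
Proof.
apply/polyP => k.
rewrite coefB coefXM coefCM coefB coefXn coefC.
case: k => [|k].
  rewrite (word_coef _ ord0) mxE /=.
  have -> : ord_pred (ord0 : 'I_n.+1) = ord_max by apply/val_inj; rewrite /= modn_small.
  by rewrite !sub0r mulrN opprK mulrC.
rewrite /= eqSS.
case: (ltnP k n) => hk.
  rewrite (word_coef _ (Ordinal (hk : k.+1 < n.+1)%N)) (word_coef _ (Ordinal (ltnW (hk : k.+1 < n.+1)%N))) mxE /=.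
  rewrite (_ : ord_pred _ = Ordinal (ltnW (hk : k.+1 < n.+1)%N)); last first.
    by apply/val_inj; rewrite /= modnDr modn_small // ltnW.
  have -> : (k == n) = false by apply/negbTE; rewrite neq_ltn hk.
  by rewrite subr0 mulr0 subr0 [LHS]mul1r.
rewrite word_coef_ge //.
case: (eqVneq k n) => [->|hkn].
  by rewrite (word_coef _ ord_max) subr0 mulr1 subrr.
rewrite word_coef_ge; last by rewrite ltn_neqAle eq_sym hkn.
by rewrite /= subr0 mulr0 subr0.
Qed.

End W.
From mathcomp Require Import ring.
Section Cp.
Variable R : comNzRingType.
Variables (n : nat) (hn : (0 < n)%N) (lam : R).
Let g : {poly R} := 'X^n - lam%:P.

Lemma word_shift_ex (c : 'rV[R]_n) :
  exists a, word_poly (cshift lam c) = 'X * word_poly c - a%:P * g.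
Proof. rewrite /g; case: n hn c => // m _ c; eexists; exact: word_shift. Qed.

Lemma g_monic : g \is monic. Proof. exact: monicXnsubC. Qed.
Lemma size_g : size g = n.+1. Proof. exact: size_XnsubC. Qed.

Lemma word_uniq (c c' : 'rV[R]_n) T : word_poly c = word_poly c' + T * g -> c = c'.
Proof.
move=> e; apply: word_inj.
have [T0|TN0] := eqVneq T 0; first by rewrite e T0 mul0r addr0.
have : (size (T * g)%R <= n)%N.
  have -> : T * g = word_poly c - word_poly c' by rewrite e addrAC subrr add0r.
  apply: leq_trans (size_polyD _ _) _; rewrite size_polyN geq_max !word_size //.
rewrite size_Mmonic ?g_monic // size_g addnS /=.
have hT : (0 < size T)%N by rewrite size_poly_gt0.
by rewrite -(prednK hT) addSn ltnNge leq_addl.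
Qed.

Definition Cpoly (C : 'rV[R]_n -> Prop) (P : {poly R}) :=
  exists c, C c /\ exists T, word_poly c = P + T * g.

Variable C : 'rV[R]_n -> Prop.
Hypothesis hC : constacyclic_code lam C.

Lemma Cpoly_word c : C c -> Cpoly C (word_poly c).
Proof. by move=> Cc; exists c; split => //; exists 0; rewrite mul0r addr0. Qed.

Lemma Cpoly_shift P T : Cpoly C (P + T * g) -> Cpoly C P.
Proof. by case=> c [Cc [T' e]]; exists c; split => //; exists (T + T'); rewrite e mulrDl addrA. Qed.

Lemma Cpoly_mem P c T : Cpoly C P -> word_poly c = P + T * g -> C c.
Proof.
case=> c' [Cc' [T' e']] e.
suff -> : c = c' by [].
apply: (@word_uniq _ _ (T - T')); rewrite e e' mulrBl; ring.
Qed.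

Lemma Cpoly_add P Q : Cpoly C P -> Cpoly C Q -> Cpoly C (P + Q).
Proof.
case: hC => _ hadd _ _ [c [Cc [T e]]] [c' [Cc' [T' e']]].
exists (c + c'); split; first exact: hadd.
by exists (T + T'); rewrite word_add e e'; ring.
Qed.

Lemma Cpoly_scale r P : Cpoly C P -> Cpoly C (r%:P * P).
Proof.
case: hC => _ _ hsc _ [c [Cc [T e]]].
exists (r *: c); split; first exact: hsc.
by exists (r%:P * T); rewrite word_scale e; ring.
Qed.

Lemma Cpoly_X P : Cpoly C P -> Cpoly C ('X * P).
Proof.
case: hC => _ _ _ hsh [c [Cc [T e]]].
exists (cshift lam c); split; first exact: hsh.
have [a ->] := word_shift_ex c.
by exists ('X * T - a%:P); rewrite e; ring.
Qed.

Lemma Cpoly_mul P a : Cpoly C P -> Cpoly C (a * P).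
Proof.
move=> CP; elim/poly_ind: a => [|a r IH].
  rewrite mul0r; case: hC => C0 _ _ _; exists 0; split => //.
  by exists 0; rewrite word0 mul0r addr0.
have -> : (a * 'X + r%:P) * P = 'X * (a * P) + r%:P * P by ring.
by apply: Cpoly_add; [apply: Cpoly_X | apply: Cpoly_scale].
Qed.

End Cp.

Lemma in_principal_code (R : comNzRingType) n (hn : (0 < n)%N) (lam : R) (h : {poly R}) :
  @constacyclic_code R n lam (in_principal lam h).
Proof.
split.
- by exists 0, 0; rewrite word0 !mul0r addr0.
- by move=> x y [a [b ex]] [a' [b' ey]]; exists (a + a'), (b + b'); rewrite word_add ex ey; ring.
- by move=> r x [a [b ex]]; exists (r%:P * a), (r%:P * b); rewrite word_scale ex; ring.
- move=> x [a [b ex]]; have [k hk] := word_shift_ex hn lam x.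
  by exists ('X * a), ('X * b - k%:P); rewrite hk ex; ring.
Qed.
Section DualLift.
Variable F : fieldType.
Lemma dualE_add (a b c d : F) : Dual a b + Dual c d = Dual (a + c) (b + d).
Proof. by []. Qed.
Lemma dualE_mul (a b c d : F) : Dual a b * Dual c d = Dual (a * c) (a * d + b * c).
Proof. by []. Qed.
Lemma dualE_opp (a b : F) : - Dual a b = Dual (- a) (- b).
Proof. by []. Qed.
Fact demb_nmod : nmod_morphism (@demb F).
Proof. by split=> [|x y] //=; rewrite /demb dualE_add addr0. Qed.
HB.instance Definition _ := GRing.isNmodMorphism.Build F (dual F) (@demb F) demb_nmod.
Fact demb_mon : monoid_morphism (@demb F).
Proof. by split=> [|x y] //=; rewrite /demb dualE_mul mulr0 mul0r addr0. Qed.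
HB.instance Definition _ := GRing.isMonoidMorphism.Build F (dual F) (@demb F) demb_mon.
End DualLift.

Notation lift := (map_poly (@demb _)).

From Stdlib Require Import Classical.
Lemma ex_min_poly (F : fieldType) (P : {poly F} -> Prop) : (exists q, P q /\ q != 0) ->
  exists d, [/\ P d, d != 0 & forall q, P q -> q != 0 -> (size d <= size q)%N].
Proof.
move=> [q [Pq q0]].
suff H : forall N (q : {poly F}), (size q <= N)%N -> P q -> q != 0 ->
  exists d, [/\ P d, d != 0 & forall q, P q -> q != 0 -> (size d <= size q)%N].
  exact: (H _ q (leqnn _) Pq q0).
elim=> [|N IH] q' hs Pq' q'0.
  by move: hs; rewrite size_poly_leq0 (negbTE q'0).
case: (classic (exists q'', [/\ P q'', q'' != 0 & (size q'' < size q')%N])).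
  case=> q'' [Pq'' q''0 hlt]; apply: (IH q'') => //.
  by rewrite -ltnS (leq_trans hlt hs).
move=> hno; exists q'; split=> // r Pr r0; rewrite leqNgt; apply/negP => hlt.
by apply: hno; exists r; split.
Qed.

Section Main.
Variable F : fieldType.
Variables (alpha beta : F) (beta_neq0 : beta != 0) (n : nat) (hn : (0 < n)%N).
Let lam : dual F := Dual alpha beta.
Let g : {poly dual F} := 'X^n - lam%:P.
Let e : {poly F} := 'X^n - alpha%:P.
Let v : {poly dual F} := (Dual 0 beta)%:P.

Definition Q0 (Q : {poly dual F}) := map_poly (@dre F) Q.
Definition Q1 (Q : {poly dual F}) := map_poly (@Defs.dim F) Q.
Definition psi Q := Q0 Q + (beta^-1)%:P * e * Q1 Q.

Lemma decomp Q : Q = lift (Q0 Q) + (Dual 0 1)%:P * lift (Q1 Q).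
Proof.
apply/polyP => i; rewrite coefD coefCM !coef_map_id0 //.
case: (Q`_i) => a b; rewrite /demb /= dualE_mul dualE_add.
by congr Dual; rewrite ?mul0r ?mulr0 ?mul1r ?addr0 ?add0r.
Qed.

Lemma lift_e : lift e = g + v.
Proof.
rewrite /e rmorphB /= map_polyXn map_polyC /= /g /v -addrA; congr (_ + _).
rewrite -polyCN -polyCN -polyCD; congr _%:P.
by rewrite /lam /demb !dualE_opp dualE_add; congr Dual; rewrite ?addr0 ?oppr0 ?addNr.
Qed.

Lemma uv : (Dual 0 1 : dual F)%:P = (demb beta^-1)%:P * v.
Proof.
by rewrite /v -polyCM /demb dualE_mul mulr0 mul0r addr0 mulVf.
Qed.

Lemma vv : v * v = 0.
Proof. by rewrite /v -polyCM dualE_mul !mul0r mulr0 addr0. Qed.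

Lemma psi_spec Q : Q = lift (psi Q) + (- (demb beta^-1)%:P * lift (Q1 Q)) * g.
Proof.
rewrite {1}(decomp Q) /psi rmorphD rmorphM rmorphM /= map_polyC /= lift_e uv.
ring.
Qed.

Lemma lift_e2 : lift (e ^+ 2) + (- (g + 2%:R * v)) * g = 0.
Proof.
rewrite rmorphXn /= lift_e.
have -> : (g + v) ^+ 2 = g * g + 2%:R * v * g + v * v by ring.
rewrite vv; ring.
Qed.

Variable C : 'rV[dual F]_n -> Prop.
Hypothesis hC : constacyclic_code lam C.

Definition D (Q : {poly F}) := Cpoly lam C (lift Q).

Lemma D_mul a Q : D Q -> D (a * Q).
Proof. by move=> DQ; rewrite /D rmorphM; apply: Cpoly_mul. Qed.
Lemma D_add P Q : D P -> D Q -> D (P + Q).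
Proof. by move=> DP DQ; rewrite /D rmorphD; apply: Cpoly_add. Qed.
Lemma D_e2 : D (e ^+ 2).
Proof.
case: hC => C0 _ _ _; exists 0; split => //.
by exists (- (g + 2%:R * v)); rewrite word0 lift_e2.
Qed.
Lemma D_psi c : C c -> D (psi (word_poly c)).
Proof.
move=> Cc; exists c; split => //.
exists (- (demb beta^-1)%:P * lift (Q1 (word_poly c))); exact: psi_spec.
Qed.


Lemma e_neq0 : e != 0.
Proof. by apply: monic_neq0; apply: monicXnsubC. Qed.

Lemma D_gen : exists d : {poly F}, [/\ d != 0, d %| e ^+ 2 & forall Q, D Q <-> d %| Q].
Proof.
have e2n0 : e ^+ 2 != 0 by apply: expf_neq0; exact: e_neq0.
have [d [Dd d0 dmin]] := ex_min_poly (ex_intro _ (e ^+ 2) (conj D_e2 e2n0)).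
have hdiv : forall Q, D Q -> d %| Q.
  move=> Q DQ.
  have DR : D (Q %% d).
    have -> : Q %% d = Q + (- (Q %/ d)) * d.
      by rewrite {2}(divp_eq Q d) mulNr addrAC subrr add0r.
    by apply: D_add => //; apply: D_mul.
  apply/modp_eq0P; apply/eqP; apply/negP => hR.
  by have := dmin _ DR (introN idP hR); rewrite leqNgt ltn_modp d0.
exists d; split => //; first exact: hdiv _ D_e2.
move=> Q; split; first exact: hdiv.
by move=> /dvdpP [k ->]; apply: D_mul.
Qed.

Lemma main_sec : exists d : {poly F}, [/\ d != 0, d %| e ^+ 2 &
  forall P, d %= P -> forall c, C c <-> in_principal lam (lift P) c].
Proof.
have [d [d0 de hD]] := D_gen.
exists d; split => // P hdP c; split.
  move=> Cc; have := D_psi Cc; rewrite hD (eqp_dvdl _ hdP) => /dvdpP [k hk].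
  exists (lift k), (- (demb beta^-1)%:P * lift (Q1 (word_poly c))).
  by rewrite {1}(psi_spec (word_poly c)) hk rmorphM.
case=> a [b hab].
have DP : D P by rewrite hD (eqp_dvdl _ hdP) dvdpp.
apply: (@Cpoly_mem _ _ hn lam C (a * lift P) c b) => //.
exact: Cpoly_mul.
Qed.
End Main.
Section Classif.
Variable F : fieldType.
Definition primelike (f : {poly F}) := (1 < size f)%N /\ forall d, coprimep d f \/ f %| d.

Variables (f1 f2 : {poly F}) (pl1 : primelike f1) (pl2 : primelike f2) (cop : coprimep f1 f2).

Lemma not_dvd_cop (f h : {poly F}) : (1 < size f)%N -> coprimep f h -> f %| h -> False.
Proof.
move=> hs ch fh; have : f %| 1 by rewrite -(Gauss_dvdpl _ ch) mul1r.
by rewrite dvdp1 => /eqP hs1; rewrite hs1 in hs.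
Qed.

Lemma div_class N : forall a b d, (a + b <= N)%N -> d %| f1 ^+ a * f2 ^+ b ->
  exists i j, [/\ (i <= a)%N, (j <= b)%N & d %= f1 ^+ i * f2 ^+ j].
Proof.
have f1n0 : f1 != 0 by apply/eqP => h; move: pl1.1; rewrite h size_poly0.
have f2n0 : f2 != 0 by apply/eqP => h; move: pl2.1; rewrite h size_poly0.
elim: N => [|N IH] a b d hab hd.
  move: hab; rewrite leqn0 addn_eq0 => /andP [/eqP a0 /eqP b0]; subst a b.
  exists 0%N, 0%N; split => //; rewrite !expr0 mulr1 -size_poly_eq1 -dvdp1.
  by move: hd; rewrite !expr0 mulr1.
case: (pl1.2 d) => [c1|/dvdpP [k hk]] ; last first.
  subst d.
  case: a hab hd => [|a] hab hd.
    exfalso; apply: (@not_dvd_cop f1 (f2 ^+ b)) pl1.1 _ _; first exact: coprimep_expr.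
    by apply: dvdp_trans (dvdp_mull _ (dvdpp _)) _; rewrite expr0 mul1r in hd; exact: hd.
  have : k %| f1 ^+ a * f2 ^+ b.
    have E : f1 ^+ a.+1 * f2 ^+ b = (f1 ^+ a * f2 ^+ b) * f1 by rewrite exprS; ring.
    by rewrite -(dvdp_mul2r _ _ f1n0) -E.
  move=> /(IH a b) [|i [j [hi hj hk]]]; first by rewrite addSn in hab.
  exists i.+1, j; split => //.
  have -> : f1 ^+ i.+1 * f2 ^+ j = (f1 ^+ i * f2 ^+ j) * f1 by rewrite exprS; ring.
  exact: eqp_mulr.
case: (pl2.2 d) => [c2|/dvdpP [k hk]] ; last first.
  subst d.
  case: b hab hd => [|b] hab hd.
    exfalso; apply: (@not_dvd_cop f2 (f1 ^+ a)) pl2.1 _ _.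
      by apply: coprimep_expr; rewrite coprimep_sym.
    by apply: dvdp_trans (dvdp_mull _ (dvdpp _)) _; rewrite expr0 mulr1 in hd; exact: hd.
  have : k %| f1 ^+ a * f2 ^+ b.
    have E : f1 ^+ a * f2 ^+ b.+1 = (f1 ^+ a * f2 ^+ b) * f2 by rewrite exprS; ring.
    by rewrite -(dvdp_mul2r _ _ f2n0) -E.
  move=> /(IH a b) [|i [j [hi hj hk]]]; first by rewrite addnS in hab.
  exists i, j.+1; split => //.
  have -> : f1 ^+ i * f2 ^+ j.+1 = (f1 ^+ i * f2 ^+ j) * f2 by rewrite exprS; ring.
  exact: eqp_mulr.
exists 0%N, 0%N; split => //; rewrite !expr0 mulr1 -size_poly_eq1 -dvdp1.
have cd : coprimep d (f1 ^+ a * f2 ^+ b) by rewrite coprimepMr !coprimep_expr.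
by rewrite -(Gauss_dvdpl _ cd) mul1r.
Qed.
End Classif.
Section Concrete.
Variable F : fieldType.
Variables (p s : nat) (p_prime : prime p) (p_odd : odd p) (hchar : p \in [pchar F]).
Variables (alpha alpha0 gamma : F).
Hypothesis alpha_neq0 : alpha != 0.
Hypothesis alpha_nonsq : ~ exists y : F, y ^+ 2 = alpha.
Hypothesis alpha0_def : alpha0 ^+ (p ^ s)%N = alpha.
Hypothesis gamma_def : gamma ^+ 4 + 4%:R * alpha0 = 0.

Lemma two_neq0 : (2%:R : F) != 0.
Proof.
rewrite -(dvdn_pcharf hchar); apply/negP => h2.
have := dvdn_leq (isT : (0 < 2)%N) h2; have := prime_gt1 p_prime.
case: p p_odd h2 => [|[|[|q]]] //.
Qed.

Lemma four_neq0 : (4%:R : F) != 0.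
Proof. by rewrite (_ : 4%N = 2 * 2)%N // natrM mulf_neq0 // two_neq0. Qed.

Lemma alpha0_val : alpha0 = - gamma ^+ 4 / 4%:R.
Proof.
have h4 := four_neq0.
have : 4%:R * alpha0 = - gamma ^+ 4 by apply/eqP; rewrite -addr_eq0 addrC gamma_def.
by move=> <-; field.
Qed.

Lemma gamma_neq0 : gamma != 0.
Proof.
apply/eqP => g0; move: alpha_neq0; rewrite -alpha0_def alpha0_val g0 expr0n /= oppr0 mul0r.
have hps : (0 < p ^ s)%N by rewrite expn_gt0 prime_gt0.
by rewrite expr0n; case: (p ^ s)%N%N hps => //= k _; rewrite eqxx.
Qed.

Lemma no_root x : x ^+ 2 + gamma * x + gamma ^+ 2 / 2%:R != 0.
Proof.
apply/eqP => hx; apply: alpha_nonsq.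
have h2 := two_neq0.
have E1 : (2%:R * x + gamma) ^+ 2 = 4%:R * (x ^+ 2 + gamma * x + gamma ^+ 2 / 2%:R) - gamma ^+ 2.
  by field.
rewrite hx mulr0 sub0r in E1.
exists (((2%:R * x + gamma) * gamma / 2%:R) ^+ (p ^ s)%N).
rewrite -exprM mulnC exprM -alpha0_def; congr (_ ^+ _).
rewrite alpha0_val expr_div_n exprMn E1.
have h4 := four_neq0.
by field.
Qed.

Definition f1F : {poly F} := 'X^2 + gamma%:P * 'X + (gamma ^+ 2 / 2%:R)%:P.
Definition f2F : {poly F} := 'X^2 - gamma%:P * 'X + (gamma ^+ 2 / 2%:R)%:P.

Lemma size_quad (a b : F) : size ('X^2 + a%:P * 'X + b%:P : {poly F}) = 3.
Proof.
have -> : 'X^2 + a%:P * 'X = ('X + a%:P) * 'X by rewrite mulrDl expr2 mulrC.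
rewrite size_MXaddC size_XaddC.
by case: eqP => // h; move: (size_XaddC a); rewrite h size_poly0.
Qed.

Lemma size_f1 : size f1F = 3. Proof. exact: size_quad. Qed.
Lemma size_f2 : size f2F = 3. Proof. by rewrite /f2F -mulNr -polyCN size_quad. Qed.

Lemma f1_noroot x : ~~ root f1F x.
Proof. by rewrite /root /f1F !hornerE no_root. Qed.
Lemma f2_noroot x : ~~ root f2F x.
Proof.
rewrite /root /f2F !hornerE.
have := no_root (- x); rewrite sqrrN mulrN.
by rewrite (_ : gamma * x = - (- gamma * x)) ?mulNr ?opprK.
Qed.

Lemma primelike_quad (f : {poly F}) : size f = 3 -> (forall x, ~~ root f x) -> primelike f.
Proof.
move=> sf nr; split; first by rewrite sf.
move=> d; set g := gcdp d f.
have fn0 : f != 0 by rewrite -size_poly_eq0 sf.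
have gf : g %| f by exact: dvdp_gcdr.
have gn0 : g != 0 by rewrite gcdp_eq0 negb_and fn0 orbT.
have := dvdp_leq fn0 gf; rewrite sf.
have := size_poly_gt0 g; rewrite gn0.
case hs : (size g) => [|[|[|[|k]]]] // _ _.
- by left; rewrite coprimep_def -/g hs.
- have [r hr] := poly2_root hs.
  by have := nr r; rewrite (root_dvdp gf hr).
- right; have : g %= f by rewrite -dvdp_size_eqp // hs sf.
  by move=> /eqp_dvdl <-; exact: dvdp_gcdl.
Qed.

Lemma pl1 : primelike f1F. Proof. exact: primelike_quad size_f1 f1_noroot. Qed.
Lemma pl2 : primelike f2F. Proof. exact: primelike_quad size_f2 f2_noroot. Qed.

Lemma cop12 : coprimep f1F f2F.
Proof.
case: (pl2.2 f1F) => // h; exfalso.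
have : f2F %| f1F - f2F by rewrite dvdp_subl.
have -> : f1F - f2F = (2%:R * gamma)%:P * 'X.
  by rewrite /f1F /f2F polyCM; ring.
have hn : (2%:R * gamma)%:P * 'X != 0.
  by rewrite -size_poly_eq0 size_Cmul ?size_polyX // mulf_neq0 ?two_neq0 ?gamma_neq0.
move=> /(dvdp_leq hn); rewrite size_Cmul ?size_polyX ?size_f2 // mulf_neq0 ?two_neq0 ?gamma_neq0 //.
Qed.

Lemma f12 : f1F * f2F = 'X^4 - alpha0%:P.
Proof.
have h2 := two_neq0.
set G := gamma%:P; set H := (gamma ^+ 2 / 2%:R)%:P.
have E : f1F * f2F = 'X^4 + (2%:R * H - G ^+ 2) * 'X^2 + H * H by rewrite /f1F /f2F -/G -/H; ring.
rewrite E.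
have E2 : 2%:R * H - G ^+ 2 = 0.
  apply/eqP; rewrite subr_eq0; apply/eqP.
  by rewrite /H /G -polyC_natr -polyCM -polyC_exp; congr _%:P; field.
rewrite E2 mul0r addr0.
have -> : H * H = - alpha0%:P.
  rewrite /H -polyCM -polyCN alpha0_val; congr _%:P.
  by field; rewrite four_neq0 two_neq0.
by [].
Qed.

Lemma e_fact : ('X^((4 * p ^ s)%N) - alpha%:P : {poly F}) = (f1F * f2F) ^+ (p ^ s)%N.
Proof.
have hp : [pchar {poly F}].-nat (p ^ s)%N.
  by rewrite pnatX (@pnatE _ p p_prime) pchar_poly hchar.
rewrite f12 exprDn_pchar // exprNn_pchar // -polyC_exp alpha0_def exprM.
by [].
Qed.

End Concrete.
Lemma lift_quad (F : fieldType) (a b : F) :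
  lift ('X^2 + a%:P * 'X + b%:P) = 'X^2 + (demb a)%:P * 'X + (demb b)%:P.
Proof.
apply/polyP => i; rewrite coef_map /= !coefD !coefCM !coefXn !coefX !coefC.
by rewrite !rmorphD !rmorphM /= !rmorph_nat (fun_if (@demb F)) rmorph0.
Qed.
Lemma lift_quad2 (F : fieldType) (a b : F) :
  lift ('X^2 - a%:P * 'X + b%:P) = 'X^2 - (demb a)%:P * 'X + (demb b)%:P.
Proof.
apply/polyP => i; rewrite coef_map /= !coefD ?coefB ?coefN !coefCM !coefXn !coefX !coefC.
by rewrite !rmorphD ?rmorphB ?rmorphN !rmorphM /= !rmorph_nat (fun_if (@demb F)) rmorph0.
Qed.

Unset Implicit Arguments.
Set Strict Implicit.

Theorem theorem3p5 (p m s : nat) (F : finFieldType)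
  (p_prime : prime p) (p_odd : odd p) (m_gt0 : (0 < m)%N) (s_gt0 : (0 < s)%N)
  (cardF : #|F| = (p ^ m)%N) (q_3mod4 : (p ^ m %% 4 = 3)%N)
  (alpha alpha0 gamma beta : F)
  (alpha_neq0 : alpha != 0) (alpha_nonsq : ~ exists y : F, y ^+ 2 = alpha)
  (alpha0_def : alpha0 ^+ (p ^ s) = alpha)
  (gamma_def : gamma ^+ 4 + 4%:R * alpha0 = 0)
  (beta_neq0 : beta != 0) :
  let lam : dual F := Dual alpha beta in
  let n := (4 * p ^ s)%N in
  let f1 : {poly dual F} :=
    'X^2 + (demb gamma)%:P * 'X + (demb (gamma ^+ 2 / 2%:R))%:P in
  let f2 : {poly dual F} :=
    'X^2 - (demb gamma)%:P * 'X + (demb (gamma ^+ 2 / 2%:R))%:P in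
  forall C : 'rV[dual F]_n -> Prop,
    constacyclic_code lam C <->
    exists i j : nat, [/\ (i <= 2 * p ^ s)%N, (j <= 2 * p ^ s)%N &
      forall c : 'rV[dual F]_n, C c <-> in_principal lam (f1 ^+ i * f2 ^+ j) c].
Proof.
move=> lam n f1 f2 C.
have hchar : p \in [pchar F] := card_finPcharP cardF p_prime.
have hn : (0 < n)%N by rewrite /n muln_gt0 expn_gt0 (prime_gt0 p_prime).
have lift_f1 : lift (f1F gamma) = f1.
  exact: lift_quad.
have lift_f2 : lift (f2F gamma) = f2.
  exact: lift_quad2.
have e2 : ('X^n - alpha%:P : {poly F}) ^+ 2 = (f1F gamma) ^+ (2 * p ^ s) * (f2F gamma) ^+ (2 * p ^ s).
  by rewrite /n (e_fact p_prime p_odd hchar alpha0_def gamma_def) -exprM mulnC exprMn.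
split.
  move=> hC.
  have [d [d0 hde hmain]] := main_sec beta_neq0 hn hC.
  rewrite e2 in hde.
  have [i [j [hi hj hdij]]] := div_class (pl1 p_prime p_odd hchar alpha_nonsq alpha0_def gamma_def)
    (pl2 p_prime p_odd hchar alpha_nonsq alpha0_def gamma_def)
    (cop12 p_prime p_odd hchar alpha_neq0 alpha_nonsq alpha0_def gamma_def) (leqnn _) hde.
  exists i, j; split => // c.
  by rewrite (hmain _ hdij c) rmorphM !rmorphXn /= lift_f1 lift_f2.
case=> i [j [hi hj hC]].
have [h0 hadd hsc hsh] := in_principal_code hn lam (f1 ^+ i * f2 ^+ j).
split.
- by apply/hC.
- by move=> x y /hC hx /hC hy; apply/hC; apply: hadd.
- by move=> r x /hC hx; apply/hC; apply: hsc.
- by move=> x /hC hx; apply/hC; apply: hsh.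
Qed.
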